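(* Let $p$ be a prime and $1\le\ell<p$. For every $u\in\mathbb{F}_p$, \[\#S_\ell(u)=\binom{p}{\ell}\Big/p=S_\ell^*+S_{\ell-1}^*=S_\ell^{*0}+S_{\ell-1}^{*0}.\]
   Context: For $u\in\mathbb{F}_p$ and $0\le \ell\le p$, $S_\ell(u)=\{S\subseteq\mathbb{F}_p \mid \#S=\ell,\ \sum_{s\in S}s=u\}$, and for $0\le\ell<p$, $S_\ell^*(u)=\{S\subseteq\mathbb{F}_p^* \mid \#S=\ell,\ \sum_{s\in S}s=u\}$, where $\mathbb{F}_p^*=\mathbb{F}_p\setminus\{0\}$ and sums are in $\mathbb{F}_p$. The cardinality $\#S_\ell^*(u)$ does not depend on $u\in\mathbb{F}_p^*$; this common value is denoted $S_\ell^*$. Also $S_\ell^{*0}:=\#S_\ell^*(0)$. *)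

(* Defs.v *)
From HB Require Import structures.
From mathcomp Require Import all_boot all_order all_algebra.
Set Implicit Arguments. Unset Strict Implicit. Unset Printing Implicit Defensive.
Import GRing.Theory Num.Theory.
Local Open Scope ring_scope.

Definition Sl (p : nat) (l : nat) (u : 'F_p) : {set {set 'F_p}} :=
  [set S : {set 'F_p} | (#|S| == l)%N && (\sum_(s in S) s == u)].

Definition Sstar (p : nat) (l : nat) (u : 'F_p) : {set {set 'F_p}} :=
  [set S : {set 'F_p} | [&& (#|S| == l)%N, (0 : 'F_p) \notin S & (\sum_(s in S) s == u)]].

(* Main.v *)
Require Import Defs.
From HB Require Import structures.
From mathcomp Require Import all_boot all_order all_algebra.
Import GRing.Theory Num.Theory.

Section Helpers.
Local Open Scope ring_scope.
Variable p : nat.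
Hypothesis hp : prime p.

Lemma sum_translate (S : {set 'F_p}) (t : 'F_p) :
  \sum_(s in [set x + t | x in S]) s = \sum_(s in S) s + t *+ #|S|.
Proof.
rewrite big_imset /=; last by move=> x y _ _; apply: addIr.
by rewrite big_split /= sumr_const.
Qed.

Lemma card_translate (S : {set 'F_p}) (t : 'F_p) :
  #|[set x + t | x in S]| = #|S|.
Proof. by apply: card_imset; apply: addIr. Qed.

Lemma Sl_le (l : nat) (hl1 : (1 <= l)%N) (hlp : (l < p)%N) (u w : 'F_p) :
  (#|Sl l u| <= #|Sl l w|)%N.
Proof.
have hl0 : (l%:R : 'F_p) != 0.
  rewrite -(dvdn_pcharf (pchar_Fp hp)); apply/negP => /dvdn_leq.
  by move=> /(_ hl1); rewrite leqNgt hlp.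
pose t := (w - u) / l%:R.
pose f := fun S : {set 'F_p} => [set x + t | x in S].
have finj : injective f.
  apply: (can_inj (g := fun S : {set 'F_p} => [set x - t | x in S])) => S.
  rewrite /f -imset_comp; rewrite -[RHS]imset_id; apply: eq_imset => x /=.
  by rewrite addrK.
rewrite -(card_imset _ finj); apply: subset_leq_card.
apply/subsetP => _ /imsetP [S HS ->]; move: HS; rewrite !inE => /andP [/eqP hc /eqP hs].
rewrite /f card_translate hc eqxx /= sum_translate hc hs.
by rewrite /t -[_ *+ l]mulr_natr divfK // addrC subrK.
Qed.

Lemma Sl_eq (l : nat) (hl1 : (1 <= l)%N) (hlp : (l < p)%N) (u w : 'F_p) :
  #|Sl l u| = #|Sl l w|.
Proof. by apply/eqP; rewrite eqn_leq !Sl_le. Qed.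

Lemma Sl_sum (l : nat) :
  (\sum_(u : 'F_p) #|Sl l u|)%N = 'C(p, l).
Proof.
have := card_draws 'F_p l; rewrite card_Fp // => <-; rewrite -sum1_card.
rewrite (partition_big (fun S : {set 'F_p} => \sum_(s in S) s) predT) //=.
apply: eq_bigr => u _; rewrite -sum1_card; apply: eq_bigl => S.
by rewrite !inE.
Qed.

Lemma Sl_split (l : nat) (hl1 : (1 <= l)%N) (u : 'F_p) :
  #|Sl l u| = (#|Sstar l u| + #|Sstar l.-1 u|)%N.
Proof.
rewrite -(cardsID [set S : {set 'F_p} | 0 \in S]) addnC; congr (_ + _)%N.
  apply: eq_card => S; rewrite !inE; case: (0 \in S) => //=.
  by rewrite andbF.
have -> : Sl l u :&: [set S : {set 'F_p} | 0 \in S]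
          = [set 0 |: T | T in Sstar l.-1 u].
  apply/setP => S; rewrite !inE; apply/idP/idP.
  - move=> /andP [/andP [/eqP hc /eqP hs] h0].
    apply/imsetP; exists (S :\ 0).
      rewrite !inE eqxx /=; apply/andP; split.
        by rewrite (cardsD1 0 S) h0 in hc; rewrite -hc.
      rewrite (big_setD1 _ h0) /= in hs.
      by apply/eqP; rewrite -hs; symmetry; exact: add0r.
    by rewrite (setD1K h0).
  - move=> /imsetP [T]; rewrite !inE => /and3P [/eqP hc h0 /eqP hs] ->.
    rewrite setU11 andbT cardsU1 h0 hc add1n prednK // eqxx /=.
    by rewrite big_setU1 //= add0r hs.
apply: card_in_imset => T1 T2; rewrite !inE => /and3P [_ h1 _] /and3P [_ h2 _] e.
by rewrite -(setU1K h1) -(setU1K h2) e.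
Qed.

End Helpers.

Theorem proposition4 (p l : nat) (hp : prime p) (hl1 : (1 <= l)%N) (hlp : (l < p)%N)
  (u : 'F_p) :
  ((#|Sl l u|%:Q = ('C(p, l))%:Q / p%:Q)%R
   /\ (forall v : 'F_p, v != 0%R ->
         #|Sl l u| = (#|Sstar l v| + #|Sstar l.-1 v|)%N)
   /\ #|Sl l u| = (#|Sstar l (0%R : 'F_p)| + #|Sstar l.-1 (0%R : 'F_p)|)%N).
Proof.
split; last split.
- have hsum := Sl_sum p hp l.
  rewrite (eq_bigr (fun _ => #|Sl l u|)) in hsum; last by move=> w _; apply: (Sl_eq p hp).
  rewrite sum_nat_const card_Fp // in hsum.
  rewrite -hsum PoszM intrM [(p%:~R * _)%R]mulrC mulfK // intr_eq0 eqz_nat -lt0n; exact: prime_gt0.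
- by move=> v _; rewrite (Sl_eq p hp l hl1 hlp u v); exact: Sl_split.
- by rewrite (Sl_eq p hp l hl1 hlp u 0%R); exact: Sl_split.
Qed.
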